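(* Let $0<q<1$ and $\lambda>0$, and let $X$ be a random variable with distribution function $F_X(t)=1-e_q(-\lambda t)$ for $t\ge 0$ (and $F_X(t)=0$ for $t<0$). Then $P_X$ is moment indeterminate in the classical sense, i.e. there exists a probability distribution on $[0,\infty)$ different from $P_X$ having the same moments $\int t^n\,dP$ for all $n\in\mathbb{N}_0$.
   Context: The $q$-exponential function is $e_q(t)=\prod_{j=0}^\infty\bigl(1-t(1-q)q^j\bigr)^{-1}$, so that $e_q(-\lambda t)=\prod_{j=0}^\infty\bigl(1+\lambda(1-q)q^jt\bigr)^{-1}$ for $t\ge0$. This $F_X$ is the distribution function of the $q$-exponential distribution, whose $q$-density is $\lambda e_q(-\lambda t)$; it is absolutely continuous with finite moments of all orders. *)

(* Defs.v *)
From Stdlib Require Import Reals.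
Open Scope R_scope.

Fixpoint fsum (g : nat -> R) (k : nat) : R :=
  match k with
  | O => 0
  | S k' => fsum g k' + g k'
  end.

Fixpoint fprod (g : nat -> R) (N : nat) : R :=
  match N with
  | O => 1
  | S N' => fprod g N' * g N'
  end.

(* Partial product  prod_{j<N} (1 + lam (1-q) q^j t)^{-1}; its limit as
   N -> oo is e_q(-lam t). *)
Definition eq_neg_partial (q lam t : R) (N : nat) : R :=
  fprod (fun j => / (1 + lam * (1 - q) * q ^ j * t)) N.

Definition tagged_partition (a b : R) (k : nat) (p xi : nat -> R) (d : R) :
  Prop :=
  (0 < k)%nat /\ p 0%nat = a /\ p k = b /\
  (forall i, (i < k)%nat ->
     p i < p (S i) /\ p (S i) - p i < d /\ p i <= xi i <= p (S i)).

Definition rs_sum (f F : R -> R) (k : nat) (p xi : nat -> R) : R :=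
  fsum (fun i => f (xi i) * (F (p (S i)) - F (p i))) k.

Definition RS_integral (f F : R -> R) (a b I : R) : Prop :=
  forall eps, 0 < eps -> exists d, 0 < d /\
    forall k p xi, tagged_partition a b k p xi d ->
      Rabs (rs_sum f F k p xi - I) < eps.

Definition distribution_function_on_nonneg (F : R -> R) : Prop :=
  (forall x y, x <= y -> F x <= F y) /\
  (forall x eps, 0 < eps -> exists d, 0 < d /\
       forall y, x <= y < x + d -> Rabs (F y - F x) < eps) /\
  (forall t, t < 0 -> F t = 0) /\
  (forall eps, 0 < eps -> exists B, forall t, B <= t -> Rabs (F t - 1) < eps).

(* m is the n-th moment  int t^n dP  of the distribution with distribution
   function F (supported on [0,oo)): the improper Riemann-Stieltjes integral
   lim_{b->oo} int_{[-1,b]} t^n dF(t)  (starting at -1 so that a possible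
   atom at 0 is included; F = 0 on (-oo,0)). *)
Definition moment (F : R -> R) (n : nat) (m : R) : Prop :=
  exists I : R -> R,
    (forall b, 0 <= b -> RS_integral (fun t => t ^ n) F (-1) b (I b)) /\
    (forall eps, 0 < eps -> exists B, forall b, B <= b -> Rabs (I b - m) < eps).

(* Main.v *)
Require Import Defs.
From Stdlib Require Import Reals Lra Lia FunctionalExtensionality.
From Coquelicot Require Import Coquelicot.
Open Scope R_scope.

Definition RI (f : R -> R) (a b : R) : R := RInt f a b.

Lemma RI_minus (f g : R -> R) a b : ex_RInt f a b -> ex_RInt g a b ->
  RI (fun x => f x - g x) a b = RI f a b - RI g a b.
Proof. intros H1 H2. pose proof (RInt_minus f g a b H1 H2) as H. exact H. Qed.

Lemma RI_plus (f g : R -> R) a b : ex_RInt f a b -> ex_RInt g a b ->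
  RI (fun x => f x + g x) a b = RI f a b + RI g a b.
Proof. intros H1 H2. pose proof (RInt_plus f g a b H1 H2) as H. exact H. Qed.

Lemma RI_scal (f : R -> R) a b c : ex_RInt f a b ->
  RI (fun x => c * f x) a b = c * RI f a b.
Proof. intros H1. pose proof (RInt_scal f a b c H1) as H. exact H. Qed.

Lemma RI_Chasles (f : R -> R) a b c : ex_RInt f a b -> ex_RInt f b c ->
  RI f a b + RI f b c = RI f a c.
Proof. intros H1 H2. pose proof (RInt_Chasles f a b c H1 H2) as H. exact H. Qed.

Lemma RI_point (f : R -> R) a : RI f a a = 0.
Proof. unfold RI. rewrite RInt_point. reflexivity. Qed.

Lemma RI_ext (f g : R -> R) a b : (forall x, Rmin a b < x < Rmax a b -> f x = g x) ->
  RI f a b = RI g a b.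
Proof. intros H. unfold RI. apply RInt_ext. exact H. Qed.

Lemma RI_ext_le (f g : R -> R) a b : a <= b -> (forall x, a < x < b -> f x = g x) ->
  RI f a b = RI g a b.
Proof. intros Hab H. apply RI_ext. rewrite Rmin_left, Rmax_right by lra. exact H. Qed.

Lemma RI_const c a b : RI (fun _ => c) a b = (b - a) * c.
Proof. unfold RI. rewrite RInt_const. reflexivity. Qed.

Lemma RI_abs_le (f : R -> R) a b M : a <= b -> ex_RInt f a b ->
  (forall t, a <= t <= b -> Rabs (f t) <= M) -> Rabs (RI f a b) <= (b - a) * M.
Proof. intros; apply abs_RInt_le_const; auto. Qed.

Lemma RI_le (f g : R -> R) a b : a <= b -> ex_RInt f a b -> ex_RInt g a b ->
  (forall x, a < x < b -> f x <= g x) -> RI f a b <= RI g a b.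
Proof. intros; apply RInt_le; auto. Qed.

Lemma RI_ge0 (f : R -> R) a b : a <= b -> ex_RInt f a b ->
  (forall x, a < x < b -> 0 <= f x) -> 0 <= RI f a b.
Proof. intros; apply RInt_ge_0; auto. Qed.

Lemma ex_RInt_minus_R (f g : R -> R) a b : ex_RInt f a b -> ex_RInt g a b ->
  ex_RInt (fun x => f x - g x) a b.
Proof. intros H1 H2. apply (ex_RInt_minus f g a b H1 H2). Qed.

Lemma ex_RInt_scal_R (f : R -> R) a b c : ex_RInt f a b ->
  ex_RInt (fun x => c * f x) a b.
Proof. intros H1. apply (ex_RInt_scal f a b c H1). Qed.

Lemma continuous_mult_R (f g : R -> R) x : continuous f x -> continuous g x ->
  continuous (fun y => f y * g y) x.
Proof. intros H1 H2. apply (continuous_mult f g x H1 H2). Qed.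

Lemma FTC_R (f df : R -> R) a b : a <= b ->
  (forall x, a <= x <= b -> is_derive f x (df x)) ->
  (forall x, a <= x <= b -> continuous df x) ->
  RI df a b = f b - f a.
Proof.
  intros Hab H1 H2. apply is_RInt_unique.
  apply (is_RInt_derive f df a b).
  - intros x Hx. apply H1. rewrite Rmin_left, Rmax_right in Hx; lra.
  - intros x Hx. apply H2. rewrite Rmin_left, Rmax_right in Hx; lra.
Qed.

Lemma ex_RInt_cont_R (f : R -> R) a b :
  (forall z, Rmin a b <= z <= Rmax a b -> continuous f z) -> ex_RInt f a b.
Proof. intros H. apply (ex_RInt_continuous (V:=R_CompleteNormedModule)). exact H. Qed.

Lemma ex_RInt_cont_le (f : R -> R) a b : a <= b ->
  (forall z, a <= z <= b -> continuous f z) -> ex_RInt f a b.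
Proof. intros Hab H. apply ex_RInt_cont_R. rewrite Rmin_left, Rmax_right by lra. exact H. Qed.

Lemma fsum_ext g h k : (forall i, (i < k)%nat -> g i = h i) -> fsum g k = fsum h k.
Proof. induction k; simpl; intros H; auto. rewrite IHk, H; auto; intros; apply H; lia. Qed.

Lemma fsum_minus g h k : fsum (fun i => g i - h i) k = fsum g k - fsum h k.
Proof. induction k; simpl; [ring|]. rewrite IHk; ring. Qed.

Lemma fsum_plus g h k : fsum (fun i => g i + h i) k = fsum g k + fsum h k.
Proof. induction k; simpl; [ring|]. rewrite IHk; ring. Qed.

Lemma fsum_scal c g k : fsum (fun i => c * g i) k = c * fsum g k.
Proof. induction k; simpl; [ring|]. rewrite IHk; ring. Qed.

Lemma fsum_abs g k : Rabs (fsum g k) <= fsum (fun i => Rabs (g i)) k.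
Proof. induction k; simpl. rewrite Rabs_R0; lra.
  eapply Rle_trans. apply Rabs_triang. lra. Qed.

Lemma fsum_le g h k : (forall i, (i < k)%nat -> g i <= h i) -> fsum g k <= fsum h k.
Proof. induction k; simpl; intros H. lra. assert (g k <= h k) by (apply H; lia).
  assert (fsum g k <= fsum h k) by (apply IHk; intros; apply H; lia). lra. Qed.

Lemma fsum_tele u k : fsum (fun i => u (S i) - u i) k = u k - u 0%nat.
Proof. induction k; simpl; [ring|]. rewrite IHk; ring. Qed.

Lemma part_mono a b k p xi d : tagged_partition a b k p xi d ->
  forall i j, (i <= j <= k)%nat -> p i <= p j.
Proof.
  intros [Hk [Ha [Hb H]]] i j. induction j; intros Hij.
  - assert (i = 0%nat) by lia. subst; lra.
  - destruct (Nat.eq_dec i (S j)). subst; lra.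
    assert (p i <= p j) by (apply IHj; lia). destruct (H j) as [H1 _]; lia || lra.
Qed.

Lemma part_in a b k p xi d : tagged_partition a b k p xi d ->
  forall j, (j <= k)%nat -> a <= p j <= b.
Proof.
  intros HP j Hj. pose proof (part_mono _ _ _ _ _ _ HP) as M. destruct HP as [Hk [Ha [Hb H]]].
  split. rewrite <- Ha. apply M; lia. rewrite <- Hb. apply M; lia.
Qed.

Lemma RS_parts (f df F : R -> R) (a b Cd : R) :
  a < b ->
  (forall x, a <= x <= b -> is_derive f x (df x)) ->
  (forall x, a <= x <= b -> continuous df x) ->
  (forall x, a <= x <= b -> Rabs (df x) <= Cd) ->
  (forall x, a <= x <= b -> continuous F x) ->
  RS_integral f F a b (f b * F b - f a * F a - RI (fun t => df t * F t) a b).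
Proof.
  intros Hab Hd Hdc Hdb HF.
  assert (UC : uniform_continuity F (fun c => a <= c <= b)).
  { apply Heine. apply compact_P3. intros x Hx. apply continuity_pt_filterlim. apply HF; auto. }
  assert (Hex : forall u v, a <= u <= b -> a <= v <= b -> ex_RInt (fun t => df t * F t) u v).
  { intros u v Hu Hv. apply ex_RInt_cont_R. intros z Hz.
    assert (a <= z <= b) by (split; [apply Rle_trans with (Rmin u v); [apply Rmin_glb|]|apply Rle_trans with (Rmax u v); [|apply Rmax_lub]]; lra).
    apply continuous_mult_R; auto. }
  assert (Hexd : forall u v, a <= u <= b -> a <= v <= b -> ex_RInt df u v).
  { intros u v Hu Hv. apply ex_RInt_cont_R. intros z Hz.
    assert (a <= z <= b) by (split; [apply Rle_trans with (Rmin u v); [apply Rmin_glb|]|apply Rle_trans with (Rmax u v); [|apply Rmax_lub]]; lra).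
    auto. }
  assert (FT : forall u v, a <= u <= v -> v <= b -> RI df u v = f v - f u).
  { intros u v Hu Hv. apply FTC_R. lra. intros; apply Hd; lra. intros; apply Hdc; lra. }
  assert (Lf : forall u v, a <= u <= v -> v <= b -> Rabs (f v - f u) <= Cd * (v - u)).
  { intros u v Hu Hv. rewrite <- FT by lra. rewrite Rmult_comm. apply RI_abs_le. lra.
    apply Hexd; lra. intros; apply Hdb; lra. }
  assert (HCd : 0 <= Cd) by (eapply Rle_trans; [apply Rabs_pos| apply (Hdb a)]; lra).
  intros eps Heps.
  set (e' := eps / (4 * (Cd + 1) * (b - a))).
  assert (He' : 0 < e') by (unfold e'; apply Rdiv_lt_0_compat; [lra| apply Rmult_lt_0_compat; lra]).
  destruct (UC (mkposreal e' He')) as [dl Hdl]. simpl in Hdl.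
  exists dl. split. apply cond_pos.
  intros k p xi HP.
  pose proof (part_in _ _ _ _ _ _ HP) as Pin.
  destruct HP as [Hk [Ha [Hb HP]]].
  set (T := fun i => f (p (S i)) * F (p (S i)) - f (p i) * F (p i) - RI (fun t => df t * F t) (p i) (p (S i))).
  assert (ST : forall j, (j <= k)%nat -> fsum T j = f (p j) * F (p j) - f (p 0%nat) * F (p 0%nat) - RI (fun t => df t * F t) (p 0%nat) (p j)).
  { induction j; intros Hj; simpl.
    - rewrite RI_point. ring.
    - rewrite IHj by lia. unfold T. rewrite <- (RI_Chasles _ (p 0%nat) (p j) (p (S j))).
      ring. apply Hex; apply Pin; lia. apply Hex; apply Pin; lia. }
  rewrite <- Ha, <- Hb, <- (ST k) by lia.
  unfold rs_sum. rewrite <- fsum_minus.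
  eapply Rle_lt_trans. apply fsum_abs.
  apply Rle_lt_trans with (fsum (fun i => 2 * (Cd + 1) * e' * (p (S i) - p i)) k).
  { apply fsum_le. intros i Hi. destruct (HP i Hi) as [H1 [H2 H3]].
    assert (Hi0 : a <= p i <= b) by (apply Pin; lia).
    assert (Hi1 : a <= p (S i) <= b) by (apply Pin; lia).
    unfold T.
    assert (E : RI (fun t => df t * F t) (p i) (p (S i)) = f (p (S i)) * F (p (S i)) - f (p i) * F (p (S i))
               + RI (fun t => df t * (F t - F (p (S i)))) (p i) (p (S i))).
    { replace (f (p (S i)) * F (p (S i)) - f (p i) * F (p (S i))) with ((f (p (S i)) - f (p i)) * F (p (S i))) by ring.
      rewrite <- FT by lra.
      replace (fun t => df t * (F t - F (p (S i)))) with (fun t => df t * F t - F (p (S i)) * df t)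
        by (apply functional_extensionality; intros; ring).
      rewrite RI_minus, RI_scal. ring. all: first [apply Hex; lra | apply ex_RInt_scal_R, Hexd; lra | apply Hexd; lra]. }
    rewrite E.
    replace (f (xi i) * (F (p (S i)) - F (p i)) -
      (f (p (S i)) * F (p (S i)) - f (p i) * F (p i) -
       (f (p (S i)) * F (p (S i)) - f (p i) * F (p (S i)) +
        RI (fun t : R => df t * (F t - F (p (S i)))) (p i) (p (S i)))))
      with ((f (xi i) - f (p i)) * (F (p (S i)) - F (p i)) + RI (fun t : R => df t * (F t - F (p (S i)))) (p i) (p (S i))) by ring.
    eapply Rle_trans. apply Rabs_triang.
    assert (B1 : Rabs ((f (xi i) - f (p i)) * (F (p (S i)) - F (p i))) <= Cd * (p (S i) - p i) * e').
    { rewrite Rabs_mult. apply Rmult_le_compat; try apply Rabs_pos.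
      eapply Rle_trans. apply Lf; lra. apply Rmult_le_compat_l; lra.
      left. apply Hdl; try lra. rewrite Rabs_right; lra. }
    assert (B2 : Rabs (RI (fun t : R => df t * (F t - F (p (S i)))) (p i) (p (S i))) <= (p (S i) - p i) * (Cd * e')).
    { apply RI_abs_le. lra.
      apply ex_RInt_cont_R. intros z Hz. rewrite Rmin_left, Rmax_right in Hz by lra.
      apply continuous_mult_R. apply Hdc; lra. apply (continuous_minus F (fun _ => F (p (S i)))).
      apply HF; lra. apply continuous_const.
      intros t Ht. rewrite Rabs_mult. apply Rmult_le_compat; try apply Rabs_pos. apply Hdb; lra.
      left. apply Hdl; try lra. rewrite Rabs_left1; lra. }
    nra. }
  rewrite fsum_scal, (fsum_tele p k), Ha, Hb.
  unfold e'. field_simplify; try lra.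
Qed.

Lemma fprod_ext g h N : (forall j, (j < N)%nat -> g j = h j) -> fprod g N = fprod h N.
Proof. induction N; simpl; intros H; auto. rewrite IHN, H; auto; intros; apply H; lia. Qed.

Lemma fprod_pos g N : (forall j, 0 < g j) -> 0 < fprod g N.
Proof. induction N; simpl; intros H. lra. apply Rmult_lt_0_compat; auto. Qed.

Lemma fprod_mono g h N : (forall j, 0 <= g j <= h j) -> 0 <= fprod g N <= fprod h N.
Proof. induction N; simpl; intros H. lra. destruct (IHN H). destruct (H N).
  split. apply Rmult_le_pos; lra. apply Rmult_le_compat; lra. Qed.

Lemma fprod_mult g h N : fprod (fun j => g j * h j) N = fprod g N * fprod h N.
Proof. induction N; simpl. ring. rewrite IHN; ring. Qed.

Lemma fprod_shift g N : fprod g (S N) = g 0%nat * fprod (fun j => g (S j)) N.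
Proof. induction N. simpl. ring. change (fprod g (S (S N))) with (fprod g (S N) * g (S N)).
  rewrite IHN. simpl. ring. Qed.

Lemma fsum_geom q N : fsum (fun j => q ^ j) N * (1 - q) = 1 - q ^ N.
Proof. induction N; simpl. ring. rewrite Rmult_plus_distr_r, IHN. ring. Qed.

Lemma cv_le_const u l c : Un_cv u l -> (forall n, u n <= c) -> l <= c.
Proof.
  intros Hu Hc. destruct (Rle_or_lt l c) as [|H]; auto.
  destruct (Hu (l - c)) as [N HN]. lra.
  specialize (HN N (le_n N)). specialize (Hc N). unfold Rdist in HN.
  apply Rabs_def2 in HN. lra.
Qed.

Lemma cv_ge_const u l c : Un_cv u l -> (forall n, c <= u n) -> c <= l.
Proof.
  intros Hu Hc. destruct (Rle_or_lt c l) as [|H]; auto.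
  destruct (Hu (c - l)) as [N HN]. lra.
  specialize (HN N (le_n N)). specialize (Hc N). unfold Rdist in HN.
  apply Rabs_def2 in HN. lra.
Qed.

Lemma cv_shift u l k : Un_cv u l -> Un_cv (fun n => u (n + k)%nat) l.
Proof. intros H eps He. destruct (H eps He) as [N HN]. exists N. intros n Hn. apply HN. lia. Qed.

Lemma cv_const c : Un_cv (fun _ => c) c.
Proof. intros eps He. exists 0%nat. intros. unfold Rdist. rewrite Rminus_diag, Rabs_R0. lra. Qed.

Lemma cv_le u v l1 l2 : Un_cv u l1 -> Un_cv v l2 -> (forall n, u n <= v n) -> l1 <= l2.
Proof. intros H1 H2 H. assert (Un_cv (fun n => v n - u n) (l2 - l1)) by (apply CV_minus; auto).
  assert (0 <= l2 - l1). apply (cv_ge_const _ _ 0 H0). intros n; specialize (H n); lra. lra. Qed.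

Section Phi.
Variables (q lam : R) (FX : R -> R).
Hypothesis Hq : 0 < q < 1.
Hypothesis Hlam : 0 < lam.
Hypothesis Hlim : forall t, 0 <= t -> Un_cv (eq_neg_partial q lam t) (1 - FX t).
Set Default Proof Using "Hq Hlam Hlim".

Definition aa := lam * (1 - q).
Definition phi t := 1 - FX t.
Definition PP t N := eq_neg_partial q lam t N.

Lemma aa_pos : 0 < aa.
Proof. unfold aa. apply Rmult_lt_0_compat; lra. Qed.

Lemma fac_pos j t : 0 <= t -> 0 < 1 + aa * q ^ j * t.
Proof. intros. pose proof aa_pos. assert (0 < q ^ j) by (apply pow_lt; lra).
  assert (0 <= aa * q ^ j * t) by (apply Rmult_le_pos; [apply Rmult_le_pos|]; lra). lra. Qed.

Lemma PP_eq t N : PP t N = fprod (fun j => / (1 + aa * q ^ j * t)) N.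
Proof. reflexivity. Qed.

Lemma PP_bounds t N : 0 <= t -> 0 < PP t N <= 1.
Proof.
  intros Ht. rewrite PP_eq. split. apply fprod_pos. intros j. apply Rinv_0_lt_compat, fac_pos; auto.
  assert (E1 : fprod (fun _ => 1) N = 1) by (clear; induction N; simpl; auto; rewrite IHN; ring).
  assert (Hm : forall j, 0 <= / (1 + aa * q ^ j * t) <= 1).
  { intros j. pose proof (fac_pos j t Ht). split. left; apply Rinv_0_lt_compat; auto.
    rewrite <- Rinv_1. apply Rinv_le_contravar. lra.
    assert (0 <= aa * q ^ j * t). apply Rmult_le_pos; [apply Rmult_le_pos|]; try lra.
    pose proof aa_pos; lra. apply pow_le; lra. lra. }
  pose proof (proj2 (fprod_mono _ (fun _ => 1) N Hm)). lra.
Qed.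

Lemma PP_zero N : PP 0 N = 1.
Proof. rewrite PP_eq. induction N; simpl; auto. rewrite IHN. rewrite Rmult_0_r, Rplus_0_r, Rinv_1. ring. Qed.

Lemma phi_lim t : 0 <= t -> Un_cv (PP t) (phi t).
Proof. intros; apply Hlim; auto. Qed.

Lemma phi0 : phi 0 = 1.
Proof. apply (UL_sequence (PP 0)). apply phi_lim; lra.
  replace (PP 0) with (fun _ : nat => 1). apply cv_const. apply functional_extensionality; intros; rewrite PP_zero; auto. Qed.

Lemma phi_bounds t : 0 <= t -> 0 <= phi t <= 1.
Proof. intros Ht. split. apply (cv_ge_const (PP t)). apply phi_lim; auto. intros n; destruct (PP_bounds t n Ht); lra.
  apply (cv_le_const (PP t)). apply phi_lim; auto. intros n; destruct (PP_bounds t n Ht); lra. Qed.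

Lemma PP_lower t N : 0 <= t -> 1 - aa * t * fsum (fun j => q ^ j) N <= PP t N.
Proof.
  intros Ht. induction N.
  - simpl. rewrite PP_eq. simpl. lra.
  - rewrite PP_eq in *. simpl. simpl fsum.
    set (P := fprod (fun j : nat => / (1 + aa * q ^ j * t)) N) in *.
    set (x := aa * q ^ N * t).
    assert (Hx : 0 <= x) by (unfold x; apply Rmult_le_pos; [apply Rmult_le_pos|]; try lra; [pose proof aa_pos; lra| apply pow_le; lra]).
    assert (HP : 0 < P) by (apply (PP_bounds t N Ht)).
    assert (HS : 0 <= aa * t * fsum (fun j => q ^ j) N).
    { apply Rmult_le_pos. apply Rmult_le_pos; [pose proof aa_pos|]; lra.
      clear - Hq; induction N; simpl. lra. assert (0 <= q ^ N) by (apply pow_le; lra). lra. }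
    assert (E : aa * t * (fsum (fun j => q ^ j) N + q ^ N) = aa * t * fsum (fun j => q ^ j) N + x) by (unfold x; ring).
    rewrite E.
    assert (Hi : 1 - x <= / (1 + x)).
    { apply Rmult_le_reg_r with (1 + x). lra. rewrite Rinv_l by lra. nra. }
    assert (0 < / (1 + x)) by (apply Rinv_0_lt_compat; lra).
    destruct (Rle_or_lt x 1).
    + apply Rle_trans with (P * (1 - x)). 2: apply Rmult_le_compat_l; lra. nra.
    + assert (0 <= P * / (1 + x)) by (apply Rmult_le_pos; lra). nra.
Qed.

Lemma geom_bound N : fsum (fun j => q ^ j) N <= / (1 - q).
Proof. apply Rmult_le_reg_r with (1 - q). lra. rewrite fsum_geom, Rinv_l by lra.
  assert (0 < q ^ N) by (apply pow_lt; lra). lra. Qed.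

Definition LL := aa / (1 - q).

Lemma phi_lower t : 0 <= t -> 1 - LL * t <= phi t.
Proof.
  intros Ht. apply (cv_ge_const (PP t)). apply phi_lim; auto. intros n.
  eapply Rle_trans. 2: apply PP_lower; auto.
  assert (aa * t * fsum (fun j => q ^ j) n <= aa * t * / (1 - q)).
  { apply Rmult_le_compat_l. apply Rmult_le_pos; [pose proof aa_pos|]; lra. apply geom_bound. }
  unfold LL. unfold Rdiv. lra.
Qed.

Lemma PP_mono x y N : 0 <= x <= y -> PP y N <= PP x N.
Proof.
  intros H. rewrite !PP_eq. apply fprod_mono. intros j.
  assert (0 < q ^ j) by (apply pow_lt; lra). pose proof aa_pos.
  split. left; apply Rinv_0_lt_compat, fac_pos; lra.
  apply Rinv_le_contravar. apply fac_pos; lra.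
  assert (aa * q ^ j * x <= aa * q ^ j * y) by (apply Rmult_le_compat_l; [apply Rmult_le_pos|]; lra). lra.
Qed.

Lemma phi_mono x y : 0 <= x <= y -> phi y <= phi x.
Proof. intros H. apply (cv_le (PP y) (PP x)). apply phi_lim; lra. apply phi_lim; lra.
  intros; apply PP_mono; auto. Qed.

Lemma PP_submult x y N : 0 <= x <= y -> PP x N * PP (y - x) N <= PP y N.
Proof.
  intros H. rewrite !PP_eq. rewrite <- fprod_mult. apply fprod_mono. intros j.
  assert (0 < q ^ j) by (apply pow_lt; lra). pose proof aa_pos.
  pose proof (fac_pos j x ltac:(lra)). pose proof (fac_pos j (y - x) ltac:(lra)).
  split. left; apply Rmult_lt_0_compat; apply Rinv_0_lt_compat; auto.
  rewrite <- Rinv_mult. apply Rinv_le_contravar. apply fac_pos; lra.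
  assert (0 <= (aa * q ^ j * x) * (aa * q ^ j * (y - x))).
  { apply Rmult_le_pos; apply Rmult_le_pos; try (apply Rmult_le_pos); lra. }
  nra.
Qed.

Lemma phi_submult x y : 0 <= x <= y -> phi x * phi (y - x) <= phi y.
Proof. intros H. apply (cv_le (fun n => PP x n * PP (y - x) n) (PP y)).
  apply CV_mult; apply phi_lim; lra. apply phi_lim; lra. intros; apply PP_submult; auto. Qed.

Lemma PP_func t N : 0 <= t -> PP t (S N) * (1 + aa * t) = PP (q * t) N.
Proof.
  intros Ht. rewrite !PP_eq. rewrite fprod_shift. simpl pow.
  replace (fprod (fun j => / (1 + aa * (q * q ^ j) * t)) N) with (fprod (fun j => / (1 + aa * q ^ j * (q * t))) N).
  rewrite Rmult_1_r. pose proof (fac_pos 0 t Ht). simpl in H. rewrite Rmult_1_r in H. field. lra.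
  apply fprod_ext. intros. f_equal. ring.
Qed.

Lemma phi_func t : 0 <= t -> phi (q * t) = (1 + aa * t) * phi t.
Proof.
  intros Ht. apply (UL_sequence (PP (q * t))). apply phi_lim. apply Rmult_le_pos; lra.
  replace (PP (q * t)) with (fun n => PP t (S n) * (1 + aa * t)).
  rewrite (Rmult_comm _ (phi t)). apply CV_mult. 
  replace (fun n => PP t (S n)) with (fun n => eq_neg_partial q lam t (n + 1)). apply cv_shift. apply Hlim; auto.
  apply functional_extensionality; intros; unfold PP; f_equal; lia. apply cv_const.
  apply functional_extensionality; intros; apply PP_func; auto. Qed.

Lemma phi_func' t : 0 <= t -> phi t = (1 + aa * t / q) * phi (t / q).
Proof. intros Ht. replace t with (q * (t / q)) at 1 by (field; lra).
  rewrite phi_func. f_equal. field; lra. apply Rdiv_le_0_compat; lra. Qed.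

Lemma PP_tail t N : 0 <= t -> t ^ N * PP t N <= fprod (fun j => / (aa * q ^ j)) N.
Proof.
  intros Ht. induction N. simpl. rewrite PP_eq; simpl; lra.
  rewrite PP_eq in *. simpl.
  assert (0 < q ^ N) by (apply pow_lt; lra). pose proof aa_pos.
  pose proof (fac_pos N t Ht).
  replace (t * t ^ N * (fprod (fun j : nat => / (1 + aa * q ^ j * t)) N * / (1 + aa * q ^ N * t)))
    with ((t ^ N * fprod (fun j : nat => / (1 + aa * q ^ j * t)) N) * (t / (1 + aa * q ^ N * t))) by (field; lra).
  apply Rmult_le_compat; auto.
  apply Rmult_le_pos. apply pow_le; auto. left; apply (PP_bounds t N Ht).
  apply Rdiv_le_0_compat; lra.
  assert (Hc : 0 < aa * q ^ N) by (apply Rmult_lt_0_compat; lra).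
  set (c := aa * q ^ N) in *.
  assert (E : t / (1 + c * t) = / c - / (c * (1 + c * t))) by (field; lra).
  rewrite E. assert (0 < / (c * (1 + c * t))) by (apply Rinv_0_lt_compat, Rmult_lt_0_compat; lra). lra.
Qed.

Lemma PP_dec t n : 0 <= t -> PP t (S n) <= PP t n.
Proof.
  intros Ht. rewrite !PP_eq. simpl.
  pose proof (proj2 (PP_bounds t n Ht)). pose proof (proj1 (PP_bounds t n Ht)). rewrite PP_eq in *.
  pose proof (fac_pos n t Ht). assert (0 <= aa * q ^ n * t).
  { apply Rmult_le_pos; [apply Rmult_le_pos|]; try lra. pose proof aa_pos; lra. apply pow_le; lra. }
  assert (/ (1 + aa * q ^ n * t) <= 1). { rewrite <- Rinv_1. apply Rinv_le_contravar; lra. }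
  nra.
Qed.

Lemma phi_tail N : exists C, 0 < C /\ forall t, 0 <= t -> t ^ N * phi t <= C.
Proof.
  exists (fprod (fun j => / (aa * q ^ j)) N + 1). split.
  assert (0 < fprod (fun j => / (aa * q ^ j)) N). apply fprod_pos. intros.
  apply Rinv_0_lt_compat, Rmult_lt_0_compat. apply aa_pos. apply pow_lt; lra. lra.
  intros t Ht. apply (cv_le_const (fun n => t ^ N * PP t (n + N))).
  apply CV_mult. apply cv_const. apply cv_shift. apply phi_lim; auto.
  intros n. eapply Rle_trans. 2: { assert (H:= PP_tail t N Ht). apply Rle_trans with (fprod (fun j => / (aa * q ^ j)) N); [exact H|lra]. }
  apply Rmult_le_compat_l. apply pow_le; auto.
  induction n. simpl. lra. eapply Rle_trans. 2: exact IHn.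
  simpl plus. apply PP_dec; auto.
Qed.

Lemma phi_lip x y : 0 <= x <= y -> phi x - phi y <= LL * (y - x).
Proof.
  intros H. pose proof (phi_submult x y H). pose proof (phi_lower (y - x) ltac:(lra)).
  pose proof (phi_bounds x ltac:(lra)). pose proof (phi_bounds (y - x) ltac:(lra)).
  assert (phi x * phi (y - x) >= phi x * (1 - LL * (y - x))) by (apply Rle_ge, Rmult_le_compat_l; lra).
  assert (0 <= LL * (y - x)). { apply Rmult_le_pos; [|lra]. unfold LL. apply Rdiv_le_0_compat; [pose proof aa_pos|]; lra. }
  nra.
Qed.

End Phi.
Unset Default Proof Using.

Lemma eps_delta_cont (f : R -> R) x :
  (forall eps, 0 < eps -> exists d, 0 < d /\ forall y, Rabs (y - x) < d -> Rabs (f y - f x) < eps) ->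
  continuous f x.
Proof.
  intros H. apply continuity_pt_filterlim. intros eps He. destruct (H eps He) as [d [Hd H2]].
  exists d. split; auto. intros y [_ Hy]. apply H2. exact Hy.
Qed.

Lemma cont_eps_delta (f : R -> R) x : continuous f x ->
  (forall eps, 0 < eps -> exists d, 0 < d /\ forall y, Rabs (y - x) < d -> Rabs (f y - f x) < eps).
Proof.
  intros H eps He. apply continuity_pt_filterlim in H. destruct (H eps He) as [d [Hd H2]].
  exists d. split; auto. intros y Hy. destruct (Req_dec y x). subst. rewrite Rminus_diag, Rabs_R0; lra.
  apply H2. split. split. exact I. auto. exact Hy.
Qed.

Lemma lip_cont (f : R -> R) L x : 0 <= L -> (forall y, Rabs (f y - f x) <= L * Rabs (y - x)) -> continuous f x.
Proof.
  intros HL H. apply eps_delta_cont. intros eps He. exists (eps / (L + 1)). split.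
  apply Rdiv_lt_0_compat; lra. intros y Hy. eapply Rle_lt_trans. apply H.
  apply Rle_lt_trans with ((L + 1) * Rabs (y - x)). pose proof (Rabs_pos (y - x)). nra.
  apply Rmult_lt_reg_r with (/ (L + 1)). apply Rinv_0_lt_compat; lra.
  replace ((L + 1) * Rabs (y - x) * / (L + 1)) with (Rabs (y - x)) by (field; lra). exact Hy.
Qed.

Lemma sin_lip a b : Rabs (sin b - sin a) <= Rabs (b - a).
Proof.
  destruct (MVT_abs sin cos a b) as [c [Hc _]]. intros; apply derivable_pt_lim_sin.
  rewrite Hc. pose proof (COS_bound c). rewrite <- (Rmult_1_l (Rabs (b - a))) at 2.
  apply Rmult_le_compat_r. apply Rabs_pos. apply Rabs_le; lra.
Qed.

Lemma ln_lip x y : 0 < x <= y -> ln y - ln x <= (y - x) / x.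
Proof.
  intros H. destruct (MVT_abs ln Rinv x y) as [c [Hc Hc2]].
  intros c Hc. apply derivable_pt_lim_ln. rewrite Rmin_left in Hc; lra.
  rewrite Rmin_left, Rmax_right in Hc2 by lra.
  assert (ln x <= ln y). { destruct (Req_dec x y). subst; lra. left; apply ln_increasing; lra. }
  assert (0 < / c) by (apply Rinv_0_lt_compat; lra).
  rewrite (Rabs_right (ln y - ln x)) in Hc by lra. rewrite Hc. rewrite (Rabs_right (y - x)) by lra.
  rewrite (Rabs_right (/ c)) by lra. unfold Rdiv. rewrite Rmult_comm. apply Rmult_le_compat_l. lra.
  apply Rinv_le_contravar; lra.
Qed.

Lemma ex_derive_cont_R (f : R -> R) x : ex_derive f x -> continuous f x.
Proof. intros H. apply (ex_derive_continuous (K:=R_AbsRing) (V:=R_NormedModule)). exact H. Qed.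

Lemma mono_lim (h : R -> R) M : (forall x y, 0 <= x <= y -> h x <= h y) -> (forall x, 0 <= x -> h x <= M) ->
  exists l, forall eps, 0 < eps -> exists B, forall b, B <= b -> Rabs (h b - l) < eps.
Proof.
  intros Hm HM.
  set (E := fun z => exists x, 0 <= x /\ z = h x).
  assert (Hb : bound E) by (exists M; intros z [x [Hx ->]]; apply HM; auto).
  assert (He : exists z, E z) by (exists (h 0); exists 0; split; [lra|auto]).
  destruct (completeness E Hb He) as [l [Hub Hlub]].
  exists l. intros eps Heps.
  destruct (Classical_Prop.classic (exists x, 0 <= x /\ l - eps < h x)) as [[x0 [Hx0 Hlt]]|Hn].
  - exists x0. intros b Hb0.
    assert (h x0 <= h b) by (apply Hm; lra).
    assert (h b <= l) by (apply Hub; exists b; split; [lra|auto]).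
    apply Rabs_def1; lra.
  - exfalso. assert (l <= l - eps). apply Hlub. intros z [x [Hx ->]].
    destruct (Rle_or_lt (h x) (l - eps)); auto. exfalso; apply Hn; exists x; auto. lra.
Qed.

Lemma deriv_pow n t : is_derive (fun t => t ^ n) t (INR n * t ^ pred n).
Proof.
  pose proof (is_derive_pow (fun t => t) n t 1 (is_derive_id t)) as H.
  rewrite Rmult_1_r in H. exact H.
Qed.

Definition IF (F : R -> R) (n : nat) (b : R) :=
  b ^ n * F b - (-1) ^ n * F (-1) - RI (fun t => INR n * t ^ pred n * F t) (-1) b.

Lemma moment_from (F : R -> R) n m : (forall x, continuous F x) ->
  (forall eps, 0 < eps -> exists B, forall b, B <= b -> Rabs (IF F n b - m) < eps) -> moment F n m.
Proof.
  intros HF Hl. exists (IF F n). split; auto.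
  intros b Hb. unfold IF.
  apply RS_parts with (Cd := INR n * (b + 1) ^ pred n). lra.
  intros; apply deriv_pow.
  intros; apply ex_derive_cont_R. auto_derive. auto.
  intros x Hx. rewrite Rabs_mult, <- RPow_abs. rewrite (Rabs_right (INR n)) by (apply Rle_ge, pos_INR).
  apply Rmult_le_compat_l. apply pos_INR. apply pow_incr. split. apply Rabs_pos. apply Rabs_le; lra.
  intros; auto.
Qed.

Lemma IF_lin F1 F2 c n b : (forall x, continuous F1 x) -> (forall x, continuous F2 x) ->
  IF (fun t => F1 t - c * F2 t) n b = IF F1 n b - c * IF F2 n b.
Proof.
  intros H1 H2. unfold IF.
  assert (E1 : ex_RInt (fun t => INR n * t ^ pred n * F1 t) (-1) b).
  { apply ex_RInt_cont_R. intros; apply continuous_mult_R; auto. apply ex_derive_cont_R. auto_derive. auto. }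
  assert (E2 : ex_RInt (fun t => INR n * t ^ pred n * F2 t) (-1) b).
  { apply ex_RInt_cont_R. intros; apply continuous_mult_R; auto. apply ex_derive_cont_R. auto_derive. auto. }
  rewrite (RI_ext _ (fun t => INR n * t ^ pred n * F1 t - c * (INR n * t ^ pred n * F2 t))).
  rewrite RI_minus, RI_scal; auto. ring. apply ex_RInt_scal_R; auto.
  intros; ring.
Qed.

Section Main.
Variables (q lam : R) (FX : R -> R).
Hypothesis Hq : 0 < q < 1.
Hypothesis Hlam : 0 < lam.
Hypothesis HFneg : forall t, t < 0 -> FX t = 0.
Hypothesis Hlim : forall t, 0 <= t -> Un_cv (eq_neg_partial q lam t) (1 - FX t).
Set Default Proof Using "Hq Hlam HFneg Hlim".

Notation a := (aa q lam).
Notation ph := (phi FX).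
Notation L := (LL q lam).

Lemma a_pos : 0 < a. Proof. apply (aa_pos q lam FX Hq Hlam Hlim). Qed.
Lemma L_pos : 0 < L. Proof. unfold LL. apply Rdiv_lt_0_compat. apply a_pos. lra. Qed.

Lemma FX0 : FX 0 = 0.
Proof. pose proof (phi0 q lam FX Hq Hlam Hlim). unfold phi in H. lra. Qed.

Lemma FX_lip x y : Rabs (FX y - FX x) <= L * Rabs (y - x).
Proof.
  pose proof L_pos.
  assert (G : forall x y, x <= y -> Rabs (FX y - FX x) <= L * (y - x)).
  { clear x y. intros x y Hxy.
    destruct (Rlt_or_le y 0).
    - rewrite !HFneg by lra. rewrite Rminus_diag, Rabs_R0. nra.
    - destruct (Rlt_or_le x 0).
      + rewrite (HFneg x) by lra. pose proof (phi_lip q lam FX Hq Hlam Hlim 0 y ltac:(lra)).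
        pose proof (phi_mono q lam FX Hq Hlam Hlim 0 y ltac:(lra)).
        unfold phi in *. rewrite FX0 in *. rewrite Rabs_right by lra. nra.
      + pose proof (phi_lip q lam FX Hq Hlam Hlim x y ltac:(lra)).
        pose proof (phi_mono q lam FX Hq Hlam Hlim x y ltac:(lra)).
        unfold phi in *. rewrite Rabs_right by lra. lra. }
  destruct (Rle_or_lt x y). rewrite (Rabs_right (y - x)) by lra. apply G; auto.
  rewrite Rabs_minus_sym, (Rabs_minus_sym y x), (Rabs_right (x - y)) by lra. apply G; lra.
Qed.

Lemma FX_cont x : continuous FX x.
Proof. apply (lip_cont _ L). left; apply L_pos. intros; apply FX_lip. Qed.

Lemma ph_cont x : continuous ph x.
Proof. unfold phi. apply (continuous_minus (fun _ => 1) FX). apply continuous_const. apply FX_cont. Qed.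

Lemma lnq_neg : ln q < 0.
Proof. rewrite <- ln_1. apply ln_increasing; lra. Qed.

Definition alpha := - (2 * PI) / ln q.

Lemma alpha_pos : 0 < alpha.
Proof. unfold alpha. pose proof lnq_neg. pose proof PI_RGT_0. unfold Rdiv.
  rewrite <- Ropp_mult_distr_l, <- Ropp_mult_distr_r_reverse. apply Rmult_lt_0_compat. lra.
  apply Ropp_0_gt_lt_contravar. apply Rinv_lt_0_compat; lra. Qed.

Definition ss t := sin (alpha * ln t).

Lemma alpha_lnq : alpha * ln q = - (2 * PI).
Proof. unfold alpha. field. pose proof lnq_neg; lra. Qed.

Lemma ss_per t : 0 < t -> ss (t / q) = ss t.
Proof. intros Ht. unfold ss. rewrite ln_div by lra.
  replace (alpha * (ln t - ln q)) with (alpha * ln t + 2 * INR 1 * PI).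
  apply sin_period. rewrite Rmult_minus_distr_l, alpha_lnq. simpl. ring. Qed.

Lemma ss_per' t : 0 < t -> ss (q * t) = ss t.
Proof. intros Ht. rewrite <- (ss_per (q * t)). f_equal. field. lra. apply Rmult_lt_0_compat; lra. Qed.

Lemma ss_bound t : Rabs (ss t) <= 1.
Proof. unfold ss. apply Rabs_le. apply SIN_bound. Qed.

Lemma ss_derive t : 0 < t -> is_derive ss t (cos (alpha * ln t) * (alpha * / t)).
Proof. intros Ht. unfold ss. auto_derive. lra. field. lra. Qed.

Lemma ss_cont t : 0 < t -> continuous ss t.
Proof. intros Ht. apply ex_derive_cont_R. eexists. apply ss_derive; auto. Qed.

Lemma ss_lip x y : 0 < x <= y -> Rabs (ss y - ss x) <= alpha * ((y - x) / x).
Proof. intros H. unfold ss. eapply Rle_trans. apply sin_lip.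
  rewrite <- Rmult_minus_distr_l, Rabs_mult, (Rabs_right alpha) by (left; apply alpha_pos).
  apply Rmult_le_compat_l. left; apply alpha_pos.
  assert (ln x <= ln y). { destruct (Req_dec x y). subst; lra. left; apply ln_increasing; lra. }
  rewrite Rabs_right by lra. apply ln_lip; auto. Qed.

Definition KK t := ss t * (FX (t / q) - FX t).

Lemma KK_neg t : t <= 0 -> KK t = 0.
Proof. intros Ht. unfold KK. destruct (Req_dec t 0). subst. unfold Rdiv. rewrite Rmult_0_l, FX0. ring.
  rewrite !HFneg. ring. lra. apply Rdiv_neg_pos; lra. Qed.

Lemma w_eq t : 0 <= t -> FX (t / q) - FX t = a * t / q * ph (t / q).
Proof. intros Ht. pose proof (phi_func' q lam FX Hq Hlam Hlim t Ht). unfold phi in *.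
  replace (FX (t / q) - FX t) with ((1 - FX t) - (1 - FX (t / q))) by ring. rewrite H. ring. Qed.

Lemma KK_abs t : Rabs (KK t) <= L * (/ q - 1) * Rabs t.
Proof.
  unfold KK. rewrite Rabs_mult. eapply Rle_trans. apply Rmult_le_compat_r. apply Rabs_pos. apply ss_bound.
  rewrite Rmult_1_l. eapply Rle_trans. apply FX_lip.
  replace (t / q - t) with ((/ q - 1) * t) by (field; lra). rewrite Rabs_mult.
  rewrite (Rabs_right (/ q - 1)). lra. assert (1 < / q). { rewrite <- Rinv_1. apply Rinv_lt_contravar; lra. } lra.
Qed.

Lemma KK_cont t : continuous KK t.
Proof.
  destruct (Rlt_or_le 0 t).
  - unfold KK. apply continuous_mult_R. apply ss_cont; auto.
    apply (continuous_minus (fun y => FX (y / q)) FX). 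
    apply (continuous_comp (fun y => y / q) FX). apply ex_derive_cont_R. auto_derive. lra.
    apply FX_cont. apply FX_cont.
  - destruct (Req_dec t 0).
    + subst. apply eps_delta_cont. intros eps He.
      assert (Hc : 0 < L * (/ q - 1)). { apply Rmult_lt_0_compat. apply L_pos.
        assert (1 < / q). { rewrite <- Rinv_1. apply Rinv_lt_contravar; lra. } lra. }
      exists (eps / (L * (/ q - 1))). split. apply Rdiv_lt_0_compat; lra.
      intros y Hy. rewrite (KK_neg 0) by lra. rewrite Rminus_0_r in *.
      eapply Rle_lt_trans. apply KK_abs.
      apply Rmult_lt_reg_r with (/ (L * (/ q - 1))). apply Rinv_0_lt_compat; lra.
      set (c := L * (/ q - 1)) in *. replace (c * Rabs y * / c) with (Rabs y) by (field; lra). exact Hy.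
    + apply eps_delta_cont. intros eps He. exists (- t). split. lra. intros y Hy.
      rewrite !KK_neg. rewrite Rminus_diag, Rabs_R0; lra. lra. apply Rabs_def2 in Hy. lra.
Qed.


Lemma pow_cont m t : continuous (fun t => t ^ m) t.
Proof. apply ex_derive_cont_R. auto_derive. auto. Qed.

Definition gA m t := t ^ m * ss t * ph t.
Definition AA m x y := RI (gA m) x y.
Definition gB t := ss t * ph t / t.
Definition AB x y := RI gB x y.

Lemma gA_cont m t : 0 < t -> continuous (gA m) t.
Proof. intros Ht. unfold gA. apply continuous_mult_R. apply continuous_mult_R. apply pow_cont.
  apply ss_cont; auto. apply ph_cont. Qed.

Lemma gB_cont t : 0 < t -> continuous gB t.
Proof. intros Ht. unfold gB. unfold Rdiv. apply continuous_mult_R. apply continuous_mult_R.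
  apply ss_cont; auto. apply ph_cont. apply ex_derive_cont_R. auto_derive. lra. Qed.

Lemma ex_pos (g : R -> R) x y : 0 < x -> 0 < y -> (forall z, 0 < z -> continuous g z) -> ex_RInt g x y.
Proof. intros Hx Hy H. apply ex_RInt_cont_R. intros z Hz. apply H.
  assert (0 < Rmin x y) by (apply Rmin_glb_lt; auto). lra. Qed.

Lemma SUB (g : R -> R) x y : 0 < x -> 0 < y -> (forall z, 0 < z -> continuous g z) ->
  RI (fun t => g (t / q)) x y = q * RI g (x / q) (y / q).
Proof.
  intros Hx Hy Hg.
  assert (E1 : forall z, / q * z + 0 = z / q) by (intros; field; lra).
  assert (Hex : ex_RInt g (/ q * x + 0) (/ q * y + 0)).
  { rewrite !E1. apply ex_pos; auto; apply Rdiv_lt_0_compat; lra. }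
  pose proof (RInt_comp_lin g (/ q) 0 x y Hex) as H.
  change (RI (fun t => scal (/ q) (g (/ q * t + 0))) x y = RI g (/ q * x + 0) (/ q * y + 0)) in H.
  rewrite !E1 in H.
  replace (fun t => scal (/ q) (g (/ q * t + 0))) with (fun t => / q * g (t / q)) in H.
  rewrite RI_scal in H. rewrite <- H. field. lra.
  apply ex_pos; auto. intros z Hz. apply (continuous_comp (fun t => t / q) g).
  apply ex_derive_cont_R. auto_derive. lra. apply Hg. apply Rdiv_lt_0_compat; lra.
  apply functional_extensionality. intros t. rewrite E1. reflexivity.
Qed.

Lemma RI_ext_pos (f g : R -> R) x y : 0 < x -> 0 < y -> (forall t, 0 < t -> f t = g t) -> RI f x y = RI g x y.
Proof. intros Hx Hy H. apply RI_ext. intros t Ht. apply H.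
  assert (0 < Rmin x y) by (apply Rmin_glb_lt; auto). lra. Qed.

Lemma KK_pos t : 0 < t -> KK t = ss t * (ph t - ph (t / q)).
Proof. intros Ht. unfold KK, phi. ring. Qed.

Lemma KK_pos2 t : 0 < t -> KK t = a / q * (t * ss t * ph (t / q)).
Proof. intros Ht. unfold KK. rewrite w_eq by lra. field. lra. Qed.

Lemma comp_q_cont (g : R -> R) z : 0 < z -> (forall u, 0 < u -> continuous g u) -> continuous (fun t => g (t / q)) z.
Proof. intros Hz H. apply (continuous_comp (fun t => t / q) g).
  apply ex_derive_cont_R. auto_derive. lra. apply H. apply Rdiv_lt_0_compat; lra. Qed.

Lemma exA m x y : 0 < x -> 0 < y -> ex_RInt (gA m) x y.
Proof. intros; apply ex_pos; auto; intros; apply gA_cont; auto. Qed.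
Lemma exAq m x y : 0 < x -> 0 < y -> ex_RInt (fun t => gA m (t / q)) x y.
Proof. intros; apply ex_pos; auto; intros; apply comp_q_cont; auto; intros; apply gA_cont; auto. Qed.
Lemma exB x y : 0 < x -> 0 < y -> ex_RInt gB x y.
Proof. intros; apply ex_pos; auto; intros; apply gB_cont; auto. Qed.
Lemma exBq x y : 0 < x -> 0 < y -> ex_RInt (fun t => gB (t / q)) x y.
Proof. intros; apply ex_pos; auto; intros; apply comp_q_cont; auto; intros; apply gB_cont; auto. Qed.

Ltac sidec := match goal with
  | |- ex_RInt (fun _ => _ * gA _ (_ / q)) _ _ => apply ex_RInt_scal_R, exAq; auto
  | |- ex_RInt (fun _ => _ * gB (_ / q)) _ _ => apply ex_RInt_scal_R, exBq; auto
  | |- ex_RInt (fun _ => gA _ (_ / q)) _ _ => apply exAq; auto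
  | |- ex_RInt (fun _ => gB (_ / q)) _ _ => apply exBq; auto
  | |- ex_RInt (gA _) _ _ => apply exA; auto
  | |- ex_RInt gB _ _ => apply exB; auto
  | |- forall z, 0 < z -> continuous (gA _) z => intros; apply gA_cont; auto
  | |- forall z, 0 < z -> continuous gB z => intros; apply gB_cont; auto
  end.

Lemma I1 m x y : 0 < x -> 0 < y ->
  RI (fun t => t ^ m * KK t) x y = AA m x y - q ^ (S m) * AA m (x / q) (y / q).
Proof.
  intros Hx Hy. unfold AA.
  rewrite (RI_ext_pos _ (fun t => gA m t - q ^ m * gA m (t / q))); auto.
  rewrite RI_minus, RI_scal, SUB; auto. change (q ^ S m) with (q * q ^ m). ring. all: try sidec.
  intros t Ht. rewrite KK_pos by auto. unfold gA. rewrite ss_per by auto.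
  unfold Rdiv. rewrite Rpow_mult_distr, pow_inv. field; repeat split; try lra; apply pow_nonzero; lra.
Qed.

Lemma I2 m x y : 0 < x -> 0 < y ->
  RI (fun t => t ^ m * KK t) x y = a * q ^ (S m) * AA (S m) (x / q) (y / q).
Proof.
  intros Hx Hy. unfold AA.
  rewrite (RI_ext_pos _ (fun t => (a * q ^ m) * gA (S m) (t / q))); auto.
  rewrite RI_scal, SUB; auto. change (q ^ S m) with (q * q ^ m). ring. all: try sidec.
  intros t Ht. rewrite KK_pos2 by auto. unfold gA. rewrite ss_per by auto.
  unfold Rdiv. rewrite Rpow_mult_distr, pow_inv. change (t ^ S m) with (t * t ^ m). change (q ^ S m) with (q * q ^ m). field; repeat split; try lra; apply pow_nonzero; lra.
Qed.

Lemma Rm m x y : 0 < x -> 0 < y ->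
  AA m x y - q ^ (S m) * AA m (x / q) (y / q) = a * q ^ (S m) * AA (S m) (x / q) (y / q).
Proof. intros. rewrite <- I1, <- I2; auto. Qed.

Lemma I3 x y : 0 < x -> 0 < y -> AB x y - AB (x / q) (y / q) = a * AA 0 (x / q) (y / q).
Proof.
  intros Hx Hy. unfold AB, AA.
  replace (RI gB (x / q) (y / q)) with (/ q * RI (fun t => gB (t / q)) x y).
  2: { rewrite SUB; auto. field; lra. intros; apply gB_cont; auto. }
  replace (a * RI (gA 0) (x / q) (y / q)) with (a / q * RI (fun t => gA 0 (t / q)) x y).
  2: { rewrite SUB; auto. field; lra. intros; apply gA_cont; auto. }
  rewrite <- RI_scal, <- RI_scal, <- RI_minus. 2-4: sidec.
  apply RI_ext_pos; auto. intros t Ht. unfold gB, gA. rewrite ss_per by auto.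
  pose proof (w_eq t ltac:(lra)). unfold phi in *.
  replace (1 - FX t) with ((1 - FX (t / q)) + (FX (t / q) - FX t)) by ring. rewrite H.
  field. lra. all: sidec.
Qed.

Lemma B1 y : 0 < y -> Rabs (AB y (y / q)) <= (/ q - 1) * ph y.
Proof.
  intros Hy. unfold AB.
  assert (Hyq : y <= y / q). { apply Rmult_le_reg_r with q. lra. field_simplify; nra. }
  replace ((/ q - 1) * ph y) with ((y / q - y) * (ph y / y)) by (field; lra).
  apply RI_abs_le; auto. apply exB; auto; apply Rdiv_lt_0_compat; lra.
  intros t Ht. unfold gB. unfold Rdiv. rewrite !Rabs_mult.
  pose proof (ss_bound t). pose proof (phi_bounds q lam FX Hq Hlam Hlim t ltac:(lra)).
  pose proof (phi_mono q lam FX Hq Hlam Hlim y t ltac:(lra)).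
  rewrite (Rabs_right (ph t)) by lra. rewrite (Rabs_right (/ t)) by (left; apply Rinv_0_lt_compat; lra).
  assert (/ t <= / y) by (apply Rinv_le_contravar; lra).
  assert (0 < / t) by (apply Rinv_0_lt_compat; lra).
  apply Rle_trans with (1 * ph t * / t). apply Rmult_le_compat_r. lra. apply Rmult_le_compat_r; lra.
  rewrite Rmult_1_l. apply Rmult_le_compat; lra.
Qed.

Lemma B2 x : 0 < x -> Rabs (AB x (x / q)) <= (/ q - 1) * L * x.
Proof.
  intros Hx. unfold AB.
  assert (Hxq : x <= x / q). { apply Rmult_le_reg_r with q. lra. field_simplify; nra. }
  assert (Hxq' : 0 < x / q) by (apply Rdiv_lt_0_compat; lra).
  assert (C1 : forall z, 0 < z -> continuous (fun t => ss t / t) z).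
  { intros z Hz. unfold Rdiv. apply continuous_mult_R. apply ss_cont; auto. apply ex_derive_cont_R. auto_derive. lra. }
  assert (C2 : forall z, 0 < z -> continuous (fun t => ss t * (ph t - 1) / t) z).
  { intros z Hz. unfold Rdiv. apply continuous_mult_R. apply continuous_mult_R. apply ss_cont; auto.
    apply (continuous_minus ph (fun _ => 1)). apply ph_cont. apply continuous_const.
    apply ex_derive_cont_R. auto_derive. lra. }
  rewrite (RI_ext_pos _ (fun t => ss t * (ph t - 1) / t + ss t / t)); auto.
  2: { intros t Ht. unfold gB. field. lra. }
  rewrite RI_plus. 2: apply ex_pos; auto. 2: apply ex_pos; auto.
  rewrite (FTC_R (fun t => - cos (alpha * ln t) / alpha) (fun t => ss t / t)); auto.
  2: { intros z Hz. unfold ss. pose proof alpha_pos. auto_derive. lra. field. split; lra. }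
  2: { intros z Hz. apply C1. lra. }
  replace (- cos (alpha * ln (x / q)) / alpha - - cos (alpha * ln x) / alpha) with 0.
  2: { rewrite ln_div by lra. replace (alpha * (ln x - ln q)) with (alpha * ln x + 2 * INR 1 * PI).
       rewrite cos_period. field. pose proof alpha_pos; lra.
       rewrite Rmult_minus_distr_l, alpha_lnq. simpl. ring. }
  rewrite Rplus_0_r.
  replace ((/ q - 1) * L * x) with ((x / q - x) * L) by (field; lra).
  apply RI_abs_le; auto. apply ex_pos; auto.
  intros t Ht. unfold Rdiv. rewrite !Rabs_mult.
  pose proof (ss_bound t). pose proof (phi_lip q lam FX Hq Hlam Hlim 0 t ltac:(lra)).
  pose proof (phi_bounds q lam FX Hq Hlam Hlim t ltac:(lra)).
  rewrite (phi0 q lam FX Hq Hlam Hlim) in H0.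
  rewrite (Rabs_left1 (ph t - 1)) by lra. rewrite (Rabs_right (/ t)) by (left; apply Rinv_0_lt_compat; lra).
  assert (0 < / t) by (apply Rinv_0_lt_compat; lra).
  apply Rle_trans with (1 * (L * t) * / t).
  apply Rmult_le_compat_r. lra. apply Rmult_le_compat; try lra; apply Rabs_pos.
  right. field. lra.
Qed.

Definition small_A m := forall eps, 0 < eps -> exists d B, 0 < d /\ 0 < B /\
  forall x y, 0 < x <= d -> B <= y -> Rabs (AA m x y) <= eps.

Lemma qinv_gt1 : 0 < / q - 1.
Proof. assert (1 < / q). { rewrite <- Rinv_1. apply Rinv_lt_contravar; lra. } lra. Qed.

Lemma small_A0 : small_A 0.
Proof.
  intros eps He. destruct (phi_tail q lam FX Hq Hlam Hlim 1) as [C1 [HC1 HT]].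
  pose proof qinv_gt1 as Hc. pose proof a_pos as Ha. pose proof L_pos as HL.
  set (c := / q - 1) in *.
  exists (eps * a / (2 * c * L)), (2 * c * C1 / (q * eps * a)).
  split. apply Rdiv_lt_0_compat. nra. nra. split. apply Rdiv_lt_0_compat. nra.
  apply Rmult_lt_0_compat; nra.
  intros x' y' Hx' Hy'.
  assert (HB : 0 < 2 * c * C1 / (q * eps * a)) by (apply Rdiv_lt_0_compat; [nra | apply Rmult_lt_0_compat; nra]).
  set (x := q * x'). set (y := q * y').
  assert (Hx : 0 < x) by (unfold x; nra). assert (Hy : 0 < y) by (unfold y; nra).
  assert (Ex : x / q = x') by (unfold x; field; lra). assert (Ey : y / q = y') by (unfold y; field; lra).
  pose proof (I3 x y Hx Hy) as I. rewrite Ex, Ey in I.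
  unfold AB in I. rewrite <- (RI_Chasles gB x x' y), <- (RI_Chasles gB x' y y') in I. 2-5: apply exB; lra.
  fold (AB x x') (AB x' y) (AB y y') in I.
  assert (E : AA 0 x' y' = (AB x x' - AB y y') / a). { apply Rmult_eq_reg_l with a. 2: lra. unfold AB. field_simplify. 2: lra. unfold AB in I. rewrite <- I. ring. }
  rewrite E. pose proof (B1 y Hy) as H1. pose proof (B2 x Hx) as H2. rewrite Ex in H2. rewrite Ey in H1.
  fold c in H1, H2.
  assert (Hph : c * ph y <= eps * a / 2).
  { specialize (HT y ltac:(lra)). simpl in HT. rewrite Rmult_1_r in HT.
    assert (ph y <= C1 / y) by (apply Rmult_le_reg_l with y; [lra|]; field_simplify; lra).
    apply Rle_trans with (c * (C1 / y)). apply Rmult_le_compat_l; lra.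
    assert (q * (2 * c * C1 / (q * eps * a)) <= y) by (unfold y; apply Rmult_le_compat_l; lra).
    replace (q * (2 * c * C1 / (q * eps * a))) with (2 * c * C1 / (eps * a)) in H0 by (field; lra).
    assert (Hea : 0 < eps * a) by nra.
    assert (2 * c * C1 <= eps * a * y).
    { apply Rmult_le_compat_l with (r := eps * a) in H0; [|lra].
      replace (eps * a * (2 * c * C1 / (eps * a))) with (2 * c * C1) in H0 by (field; lra). lra. }
    apply Rmult_le_reg_r with y; [lra|]. replace (c * (C1 / y) * y) with (c * C1) by (field; lra). nra. }
  assert (Hxb : c * L * x <= eps * a / 2).
  { assert (x <= x') by (unfold x; nra).
    destruct Hx' as [_ Hx'].
    apply Rle_trans with (c * L * (eps * a / (2 * c * L))). apply Rmult_le_compat_l. nra. lra.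
    right. field. split; lra. }
  unfold Rdiv at 1. rewrite Rabs_mult. rewrite (Rabs_right (/ a)) by (left; apply Rinv_0_lt_compat; lra).
  apply Rmult_le_reg_r with a. lra. rewrite Rmult_assoc, Rinv_l by lra.
  rewrite Rmult_1_r. unfold Rminus. eapply Rle_trans. apply Rabs_triang. rewrite Rabs_Ropp. lra.
Qed.

Lemma small_A_S m : small_A m -> small_A (S m).
Proof.
  intros HA eps He. pose proof a_pos as Ha.
  assert (Hq1 : 0 < q ^ S m <= 1).
  { split. apply pow_lt; lra. change (q ^ S m) with (q * q ^ m).
    assert (0 < q ^ m <= 1). { split. apply pow_lt; lra. clear - Hq. induction m; simpl; [lra|]. 
      assert (0 < q ^ m) by (apply pow_lt; lra). nra. } nra. }
  set (e1 := eps * a * q ^ S m / 2).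
  assert (He1 : 0 < e1) by (unfold e1; apply Rmult_lt_0_compat; [|lra]; apply Rmult_lt_0_compat; nra).
  destruct (HA e1 He1) as [d [B [Hd [HB H]]]].
  exists d, (B / q). split; auto. split. apply Rdiv_lt_0_compat; lra.
  intros x' y' Hx' Hy'.
  assert (HBq : B <= B / q). { apply Rmult_le_reg_r with q. lra. field_simplify; nra. }
  set (x := q * x'). set (y := q * y').
  assert (Hx : 0 < x) by (unfold x; nra). assert (Hy : 0 < y) by (unfold y; apply Rmult_lt_0_compat; lra).
  assert (Ex : x / q = x') by (unfold x; field; lra). assert (Ey : y / q = y') by (unfold y; field; lra).
  pose proof (Rm m x y Hx Hy) as R. rewrite Ex, Ey in R.
  assert (H1 : Rabs (AA m x y) <= e1). { apply H. unfold x; split; nra. unfold y.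
    apply Rmult_le_reg_r with (/ q). apply Rinv_0_lt_compat; lra.
    replace (q * y' * / q) with y' by (field; lra). unfold Rdiv in Hy'. lra. }
  assert (H2 : Rabs (AA m x' y') <= e1). { apply H. lra. lra. }
  assert (E : AA (S m) x' y' = (AA m x y - q ^ S m * AA m x' y') / (a * q ^ S m)).
  { rewrite R. field. split; lra. }
  rewrite E. unfold Rdiv. rewrite Rabs_mult.
  rewrite (Rabs_right (/ (a * q ^ S m))) by (left; apply Rinv_0_lt_compat; nra).
  apply Rmult_le_reg_r with (a * q ^ S m). nra. rewrite Rmult_assoc, Rinv_l by nra. rewrite Rmult_1_r.
  unfold Rminus. eapply Rle_trans. apply Rabs_triang. rewrite Rabs_Ropp, Rabs_mult, (Rabs_right (q ^ S m)) by lra.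
  unfold e1 in *. nra.
Qed.

Lemma small_A_all m : small_A m.
Proof. induction m. apply small_A0. apply small_A_S; auto. Qed.

Lemma pow_le1 t m : 0 <= t <= 1 -> 0 <= t ^ m <= 1.
Proof. intros H. induction m; simpl; [lra|]. nra. Qed.

Lemma hK_cont m t : continuous (fun t => t ^ m * KK t) t.
Proof. apply continuous_mult_R. apply pow_cont. apply KK_cont. Qed.

Lemma exK m x y : ex_RInt (fun t => t ^ m * KK t) x y.
Proof. apply ex_RInt_cont_R. intros; apply hK_cont. Qed.

Lemma KZ m : forall eps, 0 < eps -> exists B, forall b, B <= b -> Rabs (RI (fun t => t ^ m * KK t) 0 b) < eps.
Proof.
  intros eps He. pose proof qinv_gt1. pose proof L_pos.
  set (c0 := L * (/ q - 1)). assert (Hc0 : 0 < c0) by (unfold c0; nra).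
  destruct (small_A_all m (eps / 4)) as [d [B [Hd [HB HH]]]]. lra.
  set (de := Rmin 1 (Rmin (q * d) (eps / (4 * c0)))).
  assert (Hde : 0 < de). { unfold de. apply Rmin_glb_lt. lra. apply Rmin_glb_lt. nra. apply Rdiv_lt_0_compat; lra. }
  assert (Hde1 : de <= 1) by apply Rmin_l.
  assert (Hde2 : de <= q * d) by (eapply Rle_trans; [apply Rmin_r|apply Rmin_l]).
  assert (Hde3 : de <= eps / (4 * c0)) by (eapply Rle_trans; [apply Rmin_r|apply Rmin_r]).
  exists (B + 1). intros b Hb.
  assert (Hb0 : 0 < b) by lra.
  rewrite <- (RI_Chasles _ 0 de b) by apply exK.
  rewrite (I1 m de b) by lra.
  assert (A1 : Rabs (AA m de b) <= eps / 4). { apply HH. split. lra. nra. lra. }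
  assert (A2 : Rabs (AA m (de / q) (b / q)) <= eps / 4).
  { apply HH. split. apply Rdiv_lt_0_compat; lra. apply Rmult_le_reg_r with q. lra.
    replace (de / q * q) with de by (field; lra). lra.
    apply Rle_trans with b. lra. apply Rmult_le_reg_r with q. lra. replace (b / q * q) with b by (field; lra). nra. }
  assert (A0 : Rabs (RI (fun t => t ^ m * KK t) 0 de) <= eps / 4).
  { eapply Rle_trans. apply RI_abs_le with (M := c0 * de). lra. apply exK.
    intros t Ht. rewrite Rabs_mult. pose proof (pow_le1 t m ltac:(lra)) as Hp.
    rewrite (Rabs_right (t ^ m)) by lra. pose proof (KK_abs t) as Hk. rewrite (Rabs_right t) in Hk by lra.
    fold c0 in Hk. apply Rle_trans with (1 * (c0 * de)). apply Rmult_le_compat; try lra. apply Rabs_pos. nra. lra.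
    apply Rle_trans with (1 * (c0 * de)). apply Rmult_le_compat_r. nra. lra.
    rewrite Rmult_1_l. apply Rmult_le_reg_r with (/ c0). apply Rinv_0_lt_compat; lra.
    replace (c0 * de * / c0) with de by (field; lra). unfold Rdiv in Hde3. rewrite Rinv_mult in Hde3.
    replace (eps / 4 * / c0) with (eps * (/ 4 * / c0)) by (field; lra). exact Hde3. }
  assert (Hqm : 0 < q ^ S m <= 1) by (split; [apply pow_lt; lra | apply (pow_le1 q (S m)); lra]).
  unfold Rminus. eapply Rle_lt_trans. apply Rabs_triang. 
  apply Rle_lt_trans with (eps / 4 + (eps / 4 + q ^ S m * (eps / 4))).
  apply Rplus_le_compat. exact A0. eapply Rle_trans. apply Rabs_triang. rewrite Rabs_Ropp, Rabs_mult, (Rabs_right (q ^ S m)) by lra.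
  apply Rplus_le_compat. exact A1. apply Rmult_le_compat_l; lra. nra.
Qed.

Lemma dfc n x : continuous (fun t => INR n * t ^ pred n) x.
Proof. apply ex_derive_cont_R. auto_derive. auto. Qed.

Lemma exdf (F : R -> R) n x y : (forall z, continuous F z) -> ex_RInt (fun t => INR n * t ^ pred n * F t) x y.
Proof. intros H. apply ex_RInt_cont_R. intros; apply continuous_mult_R; auto. apply dfc. Qed.

Lemma RI_neg_split (F : R -> R) n b : 0 <= b -> (forall z, continuous F z) -> (forall t, t < 0 -> F t = 0) ->
  RI (fun t => INR n * t ^ pred n * F t) (-1) b = RI (fun t => INR n * t ^ pred n * F t) 0 b.
Proof.
  intros Hb HF H0. rewrite <- (RI_Chasles _ (-1) 0 b) by (apply exdf; auto).
  rewrite (RI_ext_le _ (fun _ => 0)). rewrite RI_const. ring. lra.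
  intros x Hx. rewrite H0 by lra. ring.
Qed.

Definition JJ n b := RI (fun t => INR n * t ^ pred n * ph t) 0 b.

Lemma IF_FX n b : 0 <= b -> IF FX n b = 0 ^ n - b ^ n * ph b + JJ n b.
Proof.
  intros Hb. unfold IF, JJ. rewrite RI_neg_split; auto. 2: exact FX_cont.
  rewrite (HFneg (-1)) by lra.
  rewrite (RI_ext_le _ (fun t => INR n * t ^ pred n - INR n * t ^ pred n * ph t)); auto.
  2: { intros; unfold phi; ring. }
  rewrite RI_minus. rewrite (FTC_R (fun t => t ^ n)); auto. unfold phi. ring.
  intros; apply deriv_pow. intros; apply dfc.
  apply ex_RInt_cont_R; intros; apply dfc. apply exdf. exact ph_cont.
Qed.

Lemma gJ_nonneg n t : 0 <= t -> 0 <= INR n * t ^ pred n * ph t.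
Proof. intros Ht. apply Rmult_le_pos. apply Rmult_le_pos. apply pos_INR. apply pow_le; auto.
  apply (phi_bounds q lam FX Hq Hlam Hlim t Ht). Qed.

Lemma JJ_mono n x y : 0 <= x <= y -> JJ n x <= JJ n y.
Proof.
  intros H. unfold JJ. rewrite <- (RI_Chasles _ 0 x y) by (apply exdf; exact ph_cont).
  assert (0 <= RI (fun t => INR n * t ^ pred n * ph t) x y).
  { apply RI_ge0. lra. apply exdf; exact ph_cont. intros; apply gJ_nonneg; lra. } lra.
Qed.

Lemma JJ_bound n : exists M, forall b, 0 <= b -> JJ n b <= M.
Proof.
  destruct (phi_tail q lam FX Hq Hlam Hlim (pred n + 2)) as [C [HC HT]].
  exists (JJ n 1 + INR n * C). intros b Hb.
  assert (HnC : 0 <= INR n * C) by (apply Rmult_le_pos; [apply pos_INR|lra]).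
  destruct (Rle_or_lt b 1). pose proof (JJ_mono n b 1 ltac:(lra)). lra.
  unfold JJ. rewrite <- (RI_Chasles _ 0 1 b) by (apply exdf; exact ph_cont).
  assert (RI (fun t => INR n * t ^ pred n * ph t) 1 b <= RI (fun t => INR n * C * / t ^ 2) 1 b).
  { apply RI_le. lra. apply exdf; exact ph_cont.
    apply ex_RInt_cont_le. lra. intros z Hz. apply ex_derive_cont_R. auto_derive. nra.
    intros t Ht. rewrite !Rmult_assoc. apply Rmult_le_compat_l. apply pos_INR.
    specialize (HT t ltac:(lra)). rewrite pow_add in HT.
    apply Rmult_le_reg_r with (t ^ 2). apply pow_lt; lra.
    rewrite (Rmult_assoc C), Rinv_l, Rmult_1_r. 2: apply pow_nonzero; lra. simpl pow in HT |- *. nra. }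
  assert (RI (fun t => INR n * C * / t ^ 2) 1 b = INR n * C * (1 - / b)).
  { rewrite (FTC_R (fun t => - (INR n * C) / t)). field. lra. lra.
    intros x Hx. auto_derive. lra. field. lra.
    intros z Hz. apply ex_derive_cont_R. auto_derive. nra. }
  assert (0 < / b) by (apply Rinv_0_lt_compat; lra).
  assert (INR n * C * (1 - / b) <= INR n * C) by nra.
  lra.
Qed.

Lemma FX_lim n : exists m, forall eps, 0 < eps -> exists B, forall b, B <= b -> Rabs (IF FX n b - m) < eps.
Proof.
  destruct (JJ_bound n) as [M HM].
  destruct (mono_lim (JJ n) M (JJ_mono n) HM) as [l Hl].
  destruct (phi_tail q lam FX Hq Hlam Hlim (S n)) as [C [HC HT]].
  exists (0 ^ n + l). intros eps He.
  destruct (Hl (eps / 2)) as [B1 HB1]. lra.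
  exists (Rmax B1 (2 * C / eps + 1)). intros b Hb.
  assert (Hb1 : B1 <= b) by (eapply Rle_trans; [apply Rmax_l|exact Hb]).
  assert (Hb2 : 2 * C / eps + 1 <= b) by (eapply Rle_trans; [apply Rmax_r|exact Hb]).
  assert (H2C : 0 < 2 * C / eps) by (apply Rdiv_lt_0_compat; lra).
  rewrite IF_FX by lra.
  assert (T : b ^ n * ph b < eps / 2).
  { specialize (HT b ltac:(lra)). simpl in HT.
    apply Rmult_lt_reg_l with b. lra. apply Rle_lt_trans with C. lra.
    apply Rmult_lt_reg_l with (2 / eps). apply Rdiv_lt_0_compat; lra.
    replace (2 / eps * (b * (eps / 2))) with b by (field; lra).
    replace (2 / eps * C) with (2 * C / eps) by (field; lra). lra. }
  assert (0 <= b ^ n * ph b).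
  { apply Rmult_le_pos. apply pow_le; lra. apply (phi_bounds q lam FX Hq Hlam Hlim b); lra. }
  specialize (HB1 b Hb1). apply Rabs_def2 in HB1. apply Rabs_def1; lra.
Qed.

Lemma KK_lim n : forall eps, 0 < eps -> exists B, forall b, B <= b -> Rabs (IF KK n b) < eps.
Proof.
  intros eps He.
  destruct (phi_tail q lam FX Hq Hlam Hlim (S (S n))) as [C [HC HT]].
  assert (Hn : 0 <= INR n) by apply pos_INR.
  destruct (KZ (pred n) (eps / (2 * (INR n + 1)))) as [B1 HB1].
  apply Rdiv_lt_0_compat; lra.
  pose proof a_pos as Ha.
  set (C' := a / q * C).
  assert (HC' : 0 < C') by (unfold C'; apply Rmult_lt_0_compat; [apply Rdiv_lt_0_compat|]; lra).
  exists (Rmax (Rmax B1 1) (2 * C' / eps + 1)). intros b Hb.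
  assert (Hb1 : B1 <= b) by (eapply Rle_trans; [eapply Rle_trans; [apply Rmax_l|apply Rmax_l]|exact Hb]).
  assert (Hb0 : 1 <= b) by (eapply Rle_trans; [eapply Rle_trans; [apply Rmax_r|apply Rmax_l]|exact Hb]).
  assert (Hb2 : 2 * C' / eps + 1 <= b) by (eapply Rle_trans; [apply Rmax_r|exact Hb]).
  unfold IF. rewrite RI_neg_split; try lra. 2: exact KK_cont. 2: intros; apply KK_neg; lra.
  rewrite (KK_neg (-1)) by lra.
  rewrite (RI_ext _ (fun t => INR n * (t ^ pred n * KK t))) by (intros; ring).
  rewrite RI_scal by apply exK.
  assert (T1 : Rabs (b ^ n * KK b) < eps / 2).
  { rewrite Rabs_mult. unfold KK. rewrite Rabs_mult, w_eq by lra.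
    pose proof (phi_bounds q lam FX Hq Hlam Hlim (b / q) ltac:(apply Rdiv_le_0_compat; lra)).
    pose proof (phi_mono q lam FX Hq Hlam Hlim b (b / q)).
    assert (b <= b / q). { apply Rmult_le_reg_r with q. lra. field_simplify; nra. }
    specialize (H0 ltac:(lra)).
    rewrite (Rabs_right (a * b / q * ph (b / q))).
    2: { apply Rle_ge. apply Rmult_le_pos; [|lra]. apply Rdiv_le_0_compat; [nra|lra]. }
    rewrite <- RPow_abs, Rabs_right by lra.
    apply Rle_lt_trans with (b ^ n * (1 * (a * b / q * ph b))).
    { apply Rmult_le_compat_l. apply pow_le; lra. apply Rmult_le_compat. apply Rabs_pos.
      apply Rmult_le_pos; [|lra]. apply Rdiv_le_0_compat; [nra|lra]. apply ss_bound.
      apply Rmult_le_compat_l; [|lra]. apply Rdiv_le_0_compat; [nra|lra]. }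
    specialize (HT b ltac:(lra)).
    replace (b ^ n * (1 * (a * b / q * ph b))) with (C' / C * (b ^ S n * ph b)) by (unfold C'; simpl; field; lra).
    assert (b ^ S n * ph b <= C / b).
    { apply Rmult_le_reg_l with b. lra. replace (b * (C / b)) with C by (field; lra). simpl in HT |- *. lra. }
    apply Rle_lt_trans with (C' / C * (C / b)). apply Rmult_le_compat_l. apply Rdiv_le_0_compat; lra. auto.
    replace (C' / C * (C / b)) with (C' / b) by (field; lra).
    apply Rmult_lt_reg_l with (b * (2 / eps)). apply Rmult_lt_0_compat; [lra|apply Rdiv_lt_0_compat; lra].
    replace (b * (2 / eps) * (C' / b)) with (2 * C' / eps) by (field; lra).
    replace (b * (2 / eps) * (eps / 2)) with b by (field; lra). lra. }
  assert (T2 : Rabs (INR n * RI (fun t => t ^ pred n * KK t) 0 b) <= eps / 2).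
  { rewrite Rabs_mult, Rabs_right by lra. specialize (HB1 b Hb1).
    apply Rle_trans with (INR n * (eps / (2 * (INR n + 1)))). apply Rmult_le_compat_l; lra.
    apply Rmult_le_reg_r with (2 * (INR n + 1)). lra.
    replace (INR n * (eps / (2 * (INR n + 1))) * (2 * (INR n + 1))) with (INR n * eps) by (field; lra). nra. }
  replace (b ^ n * KK b - (-1) ^ n * 0 - INR n * RI (fun t => t ^ pred n * KK t) 0 b)
    with (b ^ n * KK b + - (INR n * RI (fun t => t ^ pred n * KK t) 0 b)) by ring.
  eapply Rle_lt_trans. apply Rabs_triang. rewrite Rabs_Ropp. lra.
Qed.

Definition eps0 := 1 / (1 + 2 * (2 + alpha) / q).
Definition GG t := FX t - eps0 * KK t.

Lemma eps0_pos : 0 < eps0 /\ eps0 <= 1.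
Proof. pose proof alpha_pos. unfold eps0. assert (0 < 2 * (2 + alpha) / q) by (apply Rdiv_lt_0_compat; lra).
  split. apply Rdiv_lt_0_compat; lra. apply Rmult_le_reg_r with (1 + 2 * (2 + alpha) / q). lra.
  replace (1 / (1 + 2 * (2 + alpha) / q) * (1 + 2 * (2 + alpha) / q)) with 1 by (field; lra). lra. Qed.

Definition WW t := a * t / q * ph (t / q).

Lemma KK_W t : 0 <= t -> KK t = ss t * WW t.
Proof. intros Ht. unfold KK, WW. rewrite w_eq; auto. Qed.

Lemma GG_pos t : 0 <= t -> GG t = 1 - ph t - eps0 * (ss t * WW t).
Proof. intros Ht. unfold GG. rewrite KK_W; auto. unfold phi. ring. Qed.

Lemma ph_nn t : 0 <= t -> 0 <= ph t.
Proof. intros; apply (phi_bounds q lam FX Hq Hlam Hlim t); auto. Qed.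

Lemma le_div_q x : 0 <= x -> x <= x / q.
Proof. intros. apply Rmult_le_reg_r with q. lra. field_simplify; nra. Qed.

Lemma eps0_bound : eps0 * (2 + 2 * (1 + alpha) / q) <= 1.
Proof. pose proof alpha_pos. unfold eps0.
  assert (0 < 1 + 2 * (2 + alpha) / q) by (assert (0 < 2 * (2 + alpha) / q) by (apply Rdiv_lt_0_compat; lra); lra).
  apply Rmult_le_reg_r with (1 + 2 * (2 + alpha) / q). lra.
  replace (1 / (1 + 2 * (2 + alpha) / q) * (2 + 2 * (1 + alpha) / q) * (1 + 2 * (2 + alpha) / q))
    with (2 + 2 * (1 + alpha) / q) by (field; lra).
  rewrite Rmult_1_l. apply Rmult_le_reg_r with q. lra. field_simplify; try lra. Qed.

Lemma GG_local x y : 0 <= x <= y -> y - x <= / (2 * L) -> GG x <= GG y.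
Proof.
  intros Hxy Hh. pose proof a_pos as Ha. pose proof L_pos as HL. pose proof alpha_pos as Hal.
  destruct eps0_pos as [He0 He1]. pose proof eps0_bound as Heb.
  rewrite !GG_pos by lra.
  set (D := ph x - ph y).
  assert (HD : 0 <= D) by (unfold D; pose proof (phi_mono q lam FX Hq Hlam Hlim x y Hxy); lra).
  assert (Hxq : 0 <= x / q) by (apply Rdiv_le_0_compat; lra).
  assert (Hyq : 0 <= y / q) by (apply Rdiv_le_0_compat; lra).
  set (u := ph (x / q)). set (v := ph (y / q)).
  pose proof (ph_nn (x / q) Hxq) as Pxq. pose proof (ph_nn (y / q) Hyq) as Pyq.
  pose proof (ph_nn x ltac:(lra)) as Px. pose proof (ph_nn y ltac:(lra)) as Py.
  assert (Fx : ph x = (1 + a * x / q) * u) by (apply (phi_func' q lam FX Hq Hlam Hlim); lra).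
  assert (Fy : ph y = (1 + a * y / q) * v) by (apply (phi_func' q lam FX Hq Hlam Hlim); lra).
  assert (Mq : v <= u).
  { apply (phi_mono q lam FX Hq Hlam Hlim). split; auto. unfold Rdiv; apply Rmult_le_compat_r. left; apply Rinv_0_lt_compat; lra. lra. }
  assert (Hxx : a * x <= a * x / q) by (unfold Rdiv; rewrite Rmult_assoc; apply Rmult_le_compat_l; [lra|apply le_div_q; lra]).
  assert (Hax : 0 <= a * x) by nra.
  assert (Da : a / 2 * (y - x) * u <= D).
  { assert (H1 : (1 + a * y) * ph y <= (1 + a * x) * ph x).
    { rewrite <- !(phi_func q lam FX Hq Hlam Hlim) by lra. apply (phi_mono q lam FX Hq Hlam Hlim). nra. }
    assert (H2 : ph x / 2 <= ph y).
    { pose proof (phi_submult q lam FX Hq Hlam Hlim x y Hxy). pose proof (phi_lower q lam FX Hq Hlam Hlim (y - x) ltac:(lra)).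
      assert (L * (y - x) <= / 2). { apply Rmult_le_reg_l with (/ L). apply Rinv_0_lt_compat; lra.
        rewrite <- Rmult_assoc, Rinv_l, Rmult_1_l by lra. replace (/ L * / 2) with (/ (2 * L)) by (field; lra). lra. }
      nra. }
    assert (H3 : u * (1 + a * x) <= ph x).
    { rewrite Fx. nra. }
    assert (S1 : (1 + a * x) * D >= a * (y - x) * ph y) by (unfold D; nra).
    assert (S2 : a * (y - x) * ph y >= a * (y - x) * (ph x / 2)).
    { apply Rle_ge, Rmult_le_compat_l; [|lra]. nra. }
    assert (S3 : a * (y - x) * (ph x / 2) >= (1 + a * x) * (a / 2 * (y - x) * u)).
    { assert (0 <= a * (y - x) / 2) by nra. nra. }
    apply Rmult_le_reg_l with (1 + a * x). lra. lra. }
  assert (Db : u - v <= D + a / q * (y - x) * u).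
  { assert (E : (1 + a * x / q) * (u - v) = D + a / q * (y - x) * v).
    { unfold D. rewrite Fx, Fy. field. lra. }
    assert (u - v <= (1 + a * x / q) * (u - v)) by nra.
    assert (a / q * (y - x) * v <= a / q * (y - x) * u).
    { apply Rmult_le_compat_l; auto. apply Rmult_le_pos; [apply Rdiv_le_0_compat|]; lra. }
    lra. }
  assert (EW : WW y - WW x = (u - v) - D).
  { unfold WW, D. fold u v. rewrite Fx, Fy. field. lra. }
  assert (Dc : Rabs (ss y - ss x) * WW x <= alpha * a / q * (y - x) * u).
  { destruct (Req_dec x 0) as [Hx0|Hx0].
    - unfold WW. rewrite Hx0. replace (a * 0 / q * ph (0 / q)) with 0 by (unfold Rdiv; ring). rewrite Rmult_0_r.
      apply Rmult_le_pos; [apply Rmult_le_pos; [apply Rdiv_le_0_compat; nra| lra] | exact Pxq].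
    - pose proof (ss_lip x y ltac:(lra)) as Hs. unfold WW. fold u.
      apply Rle_trans with (alpha * ((y - x) / x) * (a * x / q * u)).
      apply Rmult_le_compat_r; auto. apply Rmult_le_pos; auto. apply Rdiv_le_0_compat; nra.
      right. field. lra. }
  assert (Hw : 0 <= WW x) by (unfold WW; apply Rmult_le_pos; auto; apply Rdiv_le_0_compat; nra).
  assert (Dd : Rabs (ss y * WW y - ss x * WW x) <= 2 * D + (1 + alpha) * (a / q * (y - x) * u)).
  { replace (ss y * WW y - ss x * WW x) with (ss y * (WW y - WW x) + (ss y - ss x) * WW x) by ring.
    eapply Rle_trans. apply Rabs_triang. rewrite !Rabs_mult, (Rabs_right (WW x)) by lra.
    assert (Rabs (ss y) * Rabs (WW y - WW x) <= (u - v) + D).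
    { rewrite EW. apply Rle_trans with (1 * Rabs (u - v - D)). apply Rmult_le_compat_r. apply Rabs_pos. apply ss_bound.
      rewrite Rmult_1_l. apply Rabs_le. lra. }
    nra. }
  assert (Du : a / q * (y - x) * u <= 2 / q * D).
  { replace (a / q * (y - x) * u) with (2 / q * (a / 2 * (y - x) * u)) by (field; lra).
    apply Rmult_le_compat_l. apply Rdiv_le_0_compat; lra. auto. }
  assert (Hfin : Rabs (ss y * WW y - ss x * WW x) <= (2 + 2 * (1 + alpha) / q) * D).
  { eapply Rle_trans. exact Dd. replace ((2 + 2 * (1 + alpha) / q) * D) with (2 * D + (1 + alpha) * (2 / q * D)) by (field; lra).
    apply Rplus_le_compat_l. apply Rmult_le_compat_l; lra. }
  apply Rabs_le_between in Hfin. destruct Hfin as [_ Hfin].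
  assert (eps0 * (ss y * WW y - ss x * WW x) <= eps0 * ((2 + 2 * (1 + alpha) / q) * D)) by (apply Rmult_le_compat_l; lra).
  assert (eps0 * ((2 + 2 * (1 + alpha) / q) * D) <= D).
  { rewrite <- Rmult_assoc. rewrite <- (Rmult_1_l D) at 2. apply Rmult_le_compat_r; lra. }
  unfold D in *. lra.
Qed.

Lemma GG_neg t : t < 0 -> GG t = 0.
Proof. intros Ht. unfold GG. rewrite HFneg, KK_neg by lra. ring. Qed.

Lemma GG_zero : GG 0 = 0.
Proof. unfold GG. rewrite FX0, KK_neg by lra. ring. Qed.

Lemma GG_cont x : continuous GG x.
Proof. unfold GG. apply (continuous_minus FX (fun t => eps0 * KK t)). apply FX_cont.
  apply (continuous_mult_R (fun _ => eps0) KK). apply continuous_const. apply KK_cont. Qed.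

Lemma GG_mono_pos x y : 0 <= x <= y -> GG x <= GG y.
Proof.
  pose proof L_pos as HL. set (h0 := / (2 * L)).
  assert (Hh0 : 0 < h0) by (unfold h0; apply Rinv_0_lt_compat; lra).
  assert (P : forall N x y, 0 <= x <= y -> y - x <= INR N * h0 -> GG x <= GG y).
  { induction N; intros x0 y0 H1 H2.
    - simpl in H2. assert (y0 = x0) by lra. subst. lra.
    - destruct (Rle_or_lt (y0 - x0) h0).
      + apply GG_local; unfold h0 in *; lra.
      + apply Rle_trans with (GG (y0 - h0)). apply IHN. lra. rewrite S_INR in H2. lra.
        apply GG_local. lra. unfold h0 in *. lra. }
  intros Hxy. destruct (archimed_cor1 (h0 / (y - x + 1))) as [N [HN HN0]].
  apply Rdiv_lt_0_compat; lra.
  apply (P N); auto.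
  assert (0 < INR N) by (apply lt_0_INR; lia).
  assert (h0 / (y - x + 1) * INR N > 1).
  { apply Rmult_lt_reg_r with (/ INR N). apply Rinv_0_lt_compat; lra.
    rewrite Rmult_assoc, Rinv_r, Rmult_1_r, Rmult_1_l by lra. lra. }
  assert (h0 * INR N > y - x + 1).
  { replace (h0 * INR N) with ((h0 / (y - x + 1) * INR N) * (y - x + 1)) by (field; lra). nra. }
  lra.
Qed.

Lemma GG_mono x y : x <= y -> GG x <= GG y.
Proof.
  intros Hxy. destruct (Rlt_or_le y 0).
  - rewrite !GG_neg by lra. lra.
  - destruct (Rlt_or_le x 0).
    + rewrite (GG_neg x) by lra. rewrite <- GG_zero. apply GG_mono_pos; lra.
    + apply GG_mono_pos; lra.
Qed.

Lemma GG_lim1 : forall eps, 0 < eps -> exists B, forall t, B <= t -> Rabs (GG t - 1) < eps.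
Proof.
  intros eps He. destruct (phi_tail q lam FX Hq Hlam Hlim 1) as [C [HC HT]].
  destruct eps0_pos as [He0 He1].
  exists (2 * C / eps + 1). intros t Ht.
  assert (H2C : 0 < 2 * C / eps) by (apply Rdiv_lt_0_compat; lra).
  assert (Ht0 : 0 < t) by lra.
  rewrite GG_pos by lra.
  assert (HW : 0 <= WW t <= ph t).
  { unfold WW. pose proof (w_eq t ltac:(lra)). pose proof (ph_nn (t / q) ltac:(apply Rdiv_le_0_compat; lra)).
    split. apply Rmult_le_pos; auto. apply Rdiv_le_0_compat; [pose proof a_pos; nra|lra].
    rewrite <- H. unfold phi in *. lra. }
  assert (Hs := ss_bound t).
  assert (Rabs (ss t * WW t) <= ph t) by (rewrite Rabs_mult, (Rabs_right (WW t)) by lra; nra).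
  assert (Hph : ph t < eps / 2).
  { specialize (HT t ltac:(lra)). simpl in HT. rewrite Rmult_1_r in HT.
    apply Rmult_lt_reg_l with t. lra. apply Rle_lt_trans with C. lra.
    apply Rmult_lt_reg_l with (2 / eps). apply Rdiv_lt_0_compat; lra.
    replace (2 / eps * (t * (eps / 2))) with t by (field; lra).
    replace (2 / eps * C) with (2 * C / eps) by (field; lra). lra. }
  pose proof (ph_nn t ltac:(lra)).
  replace (1 - ph t - eps0 * (ss t * WW t) - 1) with (- (ph t + eps0 * (ss t * WW t))) by ring.
  rewrite Rabs_Ropp. eapply Rle_lt_trans. apply Rabs_triang. rewrite Rabs_mult, (Rabs_right eps0) by lra.
  rewrite Rabs_right by lra. nra.
Qed.

Lemma phi_pos t : 0 <= t -> 0 < ph t.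
Proof.
  intros Ht. destruct (Rle_lt_or_eq_dec 0 (ph t) (ph_nn t Ht)) as [|E]; auto. exfalso.
  assert (Z : forall N, ph (q ^ N * t) = 0).
  { induction N. simpl. rewrite Rmult_1_l. auto.
    change (q ^ S N) with (q * q ^ N). rewrite Rmult_assoc, (phi_func q lam FX Hq Hlam Hlim).
    rewrite IHN. ring. apply Rmult_le_pos; auto. apply pow_le; lra. }
  pose proof L_pos.
  destruct (pow_lt_1_zero q ltac:(rewrite Rabs_right; lra) (/ (2 * L * (t + 1)))) as [N HN].
  apply Rinv_0_lt_compat; nra.
  specialize (HN N (le_n N)). rewrite Rabs_right in HN by (apply Rle_ge, pow_le; lra).
  assert (0 <= q ^ N) by (apply pow_le; lra).
  pose proof (phi_lower q lam FX Hq Hlam Hlim (q ^ N * t) ltac:(nra)). rewrite Z in H1.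
  assert (q ^ N * (2 * L * (t + 1)) < 1).
  { apply Rmult_lt_reg_r with (/ (2 * L * (t + 1))). apply Rinv_0_lt_compat; nra.
    rewrite Rmult_assoc, Rinv_r, Rmult_1_r, Rmult_1_l by nra. lra. }
  nra.
Qed.

Lemma GG_ne : GG <> FX.
Proof.
  intros E. pose proof alpha_pos. set (t1 := exp (PI / (2 * alpha))).
  assert (Ht1 : 0 < t1) by apply exp_pos.
  assert (Hs : ss t1 = 1). { unfold ss, t1. rewrite ln_exp. replace (alpha * (PI / (2 * alpha))) with (PI / 2) by (field; lra). apply sin_PI2. }
  assert (HK : KK t1 = 0). { assert (GG t1 = FX t1) by (rewrite E; auto). unfold GG in H0.
    destruct eps0_pos. apply Rmult_eq_reg_l with eps0; lra. }
  rewrite KK_W in HK by lra. rewrite Hs, Rmult_1_l in HK. unfold WW in HK.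
  pose proof (phi_pos (t1 / q) ltac:(apply Rdiv_le_0_compat; lra)). pose proof a_pos.
  assert (0 < a * t1 / q) by (apply Rdiv_lt_0_compat; nra). nra.
Qed.

Lemma main_sec : exists G : R -> R,
    distribution_function_on_nonneg G /\
    G <> FX /\
    (forall n : nat, exists m : R, moment FX n m /\ moment G n m).
Proof.
  exists GG. split; [|split].
  - split; [|split; [|split]].
    + apply GG_mono.
    + intros x eps He. destruct (cont_eps_delta GG x (GG_cont x) eps He) as [d [Hd H]].
      exists d. split; auto. intros y Hy. apply H. apply Rabs_def1; lra.
    + apply GG_neg.
    + apply GG_lim1.
  - apply GG_ne.
  - intros n. destruct (FX_lim n) as [m Hm]. exists m. split.
    + apply moment_from. apply FX_cont. exact Hm.
    + apply moment_from. apply GG_cont.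
      intros eps He. destruct (Hm (eps / 2)) as [B1 HB1]. lra.
      destruct (KK_lim n (eps / 2 / eps0)) as [B2 HB2]. destruct eps0_pos. apply Rdiv_lt_0_compat; lra.
      exists (Rmax B1 B2). intros b Hb.
      specialize (HB1 b (Rle_trans _ _ _ (Rmax_l _ _) Hb)). specialize (HB2 b (Rle_trans _ _ _ (Rmax_r _ _) Hb)).
      unfold GG. rewrite IF_lin. 2: apply FX_cont. 2: apply KK_cont.
      destruct eps0_pos.
      replace (IF FX n b - eps0 * IF KK n b - m) with ((IF FX n b - m) + - (eps0 * IF KK n b)) by ring.
      eapply Rle_lt_trans. apply Rabs_triang. rewrite Rabs_Ropp, Rabs_mult, (Rabs_right eps0) by lra.
      assert (eps0 * Rabs (IF KK n b) < eps / 2).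
      { apply Rmult_lt_reg_l with (/ eps0). apply Rinv_0_lt_compat; lra.
        rewrite <- Rmult_assoc, Rinv_l, Rmult_1_l by lra. replace (/ eps0 * (eps / 2)) with (eps / 2 / eps0) by (field; lra). lra. }
      lra.
Qed.

End Main.
Unset Default Proof Using.

Theorem proposition5 (q lam : R) (FX : R -> R) :
  0 < q < 1 -> 0 < lam ->
  (forall t, t < 0 -> FX t = 0) ->
  (forall t, 0 <= t -> Un_cv (eq_neg_partial q lam t) (1 - FX t)) ->
  exists G : R -> R,
    distribution_function_on_nonneg G /\
    G <> FX /\
    (forall n : nat, exists m : R, moment FX n m /\ moment G n m).
Proof using. intros Hq0 Hl Hn Hlim0. eapply main_sec; eauto. Qed.
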